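(* Every almost zero-dimensional space that is rim-$\sigma$-compact, or that is rational, is zero-dimensional.
   Context: All spaces are separable and metrizable. A subset $A$ of $X$ is a C-set in $X$ if it is an intersection of clopen subsets of $X$. $X$ is almost zero-dimensional if every point has a neighborhood basis consisting of C-sets in $X$. $X$ is rim-$\sigma$-compact if it has a basis of open sets with $\sigma$-compact boundaries, and rational if it has a basis of open sets with countable boundaries. *)

(* Defs.v *)
From Stdlib Require Import Reals List.
Open Scope R_scope.

(* A metric space.  Every notion below is topological, so quantifying over
   metric spaces is the same as quantifying over metrizable spaces. *)
Record MetricSpace := {
  carrier :> Type;
  dist : carrier -> carrier -> R;
  dist_self : forall x, dist x x = 0;
  dist_eq : forall x y, dist x y = 0 -> x = y;
  dist_sym : forall x y, dist x y = dist y x;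
  dist_tri : forall x y z, dist x z <= dist x y + dist y z
}.

Section Topo.
Variable X : MetricSpace.

Definition ball (x : X) (r : R) : X -> Prop := fun y => dist X x y < r.

Definition subset (A B : X -> Prop) : Prop := forall x, A x -> B x.

Definition is_open (U : X -> Prop) : Prop :=
  forall x, U x -> exists r, r > 0 /\ subset (ball x r) U.

Definition is_closed (F : X -> Prop) : Prop := is_open (fun x => ~ F x).

Definition clopen (U : X -> Prop) : Prop := is_open U /\ is_closed U.

Definition closure (A : X -> Prop) : X -> Prop :=
  fun x => forall r, r > 0 -> exists y, A y /\ dist X x y < r.

Definition boundary (A : X -> Prop) : X -> Prop :=
  fun x => closure A x /\ closure (fun y => ~ A y) x.

Definition countable_set (A : X -> Prop) : Prop :=
  exists g : X -> nat, forall x y, A x -> A y -> g x = g y -> x = y.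

Definition compact_set (K : X -> Prop) : Prop :=
  forall F : (X -> Prop) -> Prop,
    (forall U, F U -> is_open U) ->
    (forall x, K x -> exists U, F U /\ U x) ->
    exists l : list (X -> Prop),
      (forall U, In U l -> F U) /\
      (forall x, K x -> exists U, In U l /\ U x).

Definition sigma_compact_set (A : X -> Prop) : Prop :=
  exists K : nat -> (X -> Prop),
    (forall n, compact_set (K n)) /\
    (forall x, A x <-> exists n, K n x).

Definition separable : Prop :=
  exists D : X -> Prop, countable_set D /\ forall x, closure D x.

Definition C_set (A : X -> Prop) : Prop :=
  exists F : (X -> Prop) -> Prop,
    (forall C, F C -> clopen C) /\
    (forall x, A x <-> (forall C, F C -> C x)).

Definition neighborhood (N : X -> Prop) (x : X) : Prop :=
  exists U, is_open U /\ U x /\ subset U N.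

Definition almost_zero_dimensional : Prop :=
  forall x U, is_open U -> U x ->
    exists A, C_set A /\ neighborhood A x /\ subset A U.

Definition zero_dimensional : Prop :=
  forall x U, is_open U -> U x ->
    exists V, clopen V /\ V x /\ subset V U.

Definition rim_sigma_compact : Prop :=
  forall x U, is_open U -> U x ->
    exists V, is_open V /\ V x /\ subset V U /\ sigma_compact_set (boundary V).

Definition rational : Prop :=
  forall x U, is_open U -> U x ->
    exists V, is_open V /\ V x /\ subset V U /\ countable_set (boundary V).

End Topo.

(* Main.v *)
Require Import Defs.
From Stdlib Require Import Reals List.
From Stdlib Require Import Classical ClassicalEpsilon Lra Lia.
Open Scope R_scope.

Lemma ball_open (X : MetricSpace) x r : is_open X (ball X x r).
Proof.
  intros y Hy. unfold ball in Hy. exists (r - Defs.dist X x y). split; [lra|].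
  intros z Hz. unfold ball in *. pose proof (Defs.dist_tri X x y z). lra.
Qed.

Lemma open_ball_in (X : MetricSpace) x r y : ball X x r y ->
  exists s, s > 0 /\ subset X (ball X y s) (ball X x r).
Proof. intros H. exact (ball_open X x r y H). Qed.

Lemma open_not_cl_compl (X : MetricSpace) V y :
  is_open X V -> V y -> ~ closure X (fun z => ~ V z) y.
Proof.
  intros HV Hy Hc. destruct (HV y Hy) as [r [Hr Hs]].
  destruct (Hc r Hr) as [z [Hz Hd]]. apply Hz, Hs. exact Hd.
Qed.

Lemma clopen_ext (X : MetricSpace) (A B : X -> Prop) :
  (forall z, A z <-> B z) -> clopen X A -> clopen X B.
Proof.
  intros E [Ho Hc]. split.
  - intros x Hx. apply E in Hx. destruct (Ho x Hx) as [r [Hr Hs]].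
    exists r; split; auto. intros z Hz. apply E, Hs, Hz.
  - intros x Hx. assert (~ A x) by (rewrite E; auto).
    destruct (Hc x H) as [r [Hr Hs]]. exists r; split; auto.
    intros z Hz. rewrite <- E. apply Hs, Hz.
Qed.

Lemma clopen_compl (X : MetricSpace) (C : X -> Prop) :
  clopen X C -> clopen X (fun z => ~ C z).
Proof.
  intros [Ho Hc]. split; [exact Hc|].
  intros x Hx. apply NNPP in Hx. destruct (Ho x Hx) as [r [Hr Hs]].
  exists r; split; auto. intros z Hz Hn. apply Hn, Hs, Hz.
Qed.

Lemma open_inter (X : MetricSpace) (A B : X -> Prop) :
  is_open X A -> is_open X B -> is_open X (fun z => A z /\ B z).
Proof.
  intros HA HB x [Ha Hb]. destruct (HA x Ha) as [r [Hr Hs]].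
  destruct (HB x Hb) as [r' [Hr' Hs']]. exists (Rmin r r'). split.
  - apply Rmin_pos; auto.
  - intros z Hz. unfold ball in Hz. split.
    + apply Hs. unfold ball. pose proof (Rmin_l r r'). lra.
    + apply Hs'. unfold ball. pose proof (Rmin_r r r'). lra.
Qed.

Lemma clopen_inter (X : MetricSpace) (A B : X -> Prop) :
  clopen X A -> clopen X B -> clopen X (fun z => A z /\ B z).
Proof.
  intros [HAo HAc] [HBo HBc]. split.
  - apply open_inter; auto.
  - intros x Hx. destruct (classic (A x)) as [Ha|Ha].
    + assert (Hb : ~ B x) by tauto. destruct (HBc x Hb) as [r [Hr Hs]].
      exists r; split; auto. intros z Hz [_ H]. exact (Hs z Hz H).
    + destruct (HAc x Ha) as [r [Hr Hs]].
      exists r; split; auto. intros z Hz [H _]. exact (Hs z Hz H).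
Qed.

Lemma clopen_union (X : MetricSpace) (A B : X -> Prop) :
  clopen X A -> clopen X B -> clopen X (fun z => A z \/ B z).
Proof.
  intros HA HB.
  apply (clopen_ext X (fun z => ~ ((~ A z) /\ (~ B z)))).
  { intros z; tauto. }
  apply clopen_compl, clopen_inter; apply clopen_compl; auto.
Qed.

Lemma clopen_full (X : MetricSpace) : clopen X (fun _ => True).
Proof.
  split.
  - intros x _. exists 1. split; [lra|]. intros z _; exact I.
  - intros x Hx. exfalso; apply Hx; exact I.
Qed.

Lemma clopen_empty (X : MetricSpace) : clopen X (fun _ => False).
Proof.
  apply (clopen_ext X (fun z => ~ True)). { intros; tauto. }
  apply clopen_compl, clopen_full.
Qed.

Lemma Cset_sep (X : MetricSpace) (B : X -> Prop) y :
  C_set X B -> ~ B y ->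
  exists C, clopen X C /\ C y /\ forall z, B z -> ~ C z.
Proof.
  intros [F [HF HB]] Hy.
  assert (exists C, F C /\ ~ C y) as [C [HC Hn]].
  { apply NNPP. intro H. apply Hy, HB. intros C HC.
    apply NNPP. intro H'. apply H. eauto. }
  exists (fun z => ~ C z). split; [apply clopen_compl; auto|]. split; auto.
  intros z Hz Hn'. apply Hn'. apply (proj1 (HB z) Hz C HC).
Qed.

Lemma sep_list (X : MetricSpace) y (l : list (X -> Prop)) :
  (forall B, In B l -> C_set X B /\ ~ B y) ->
  exists C, clopen X C /\ C y /\ forall B, In B l -> forall z, B z -> ~ C z.
Proof.
  induction l as [|B0 l IH]; intros H.
  - exists (fun _ => True). split; [apply clopen_full|]. split; [exact I|].
    intros B [].
  - destruct IH as [C [HC [Cy HCd]]]. { intros B HB; apply H; right; auto. }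
    destruct (H B0 (or_introl eq_refl)) as [HB0 HB0y].
    destruct (Cset_sep X B0 y HB0 HB0y) as [C' [HC' [C'y HC'd]]].
    exists (fun z => C z /\ C' z). split; [apply clopen_inter; auto|].
    split; [auto|]. intros B [<-|HB] z Hz [H1 H2].
    + exact (HC'd z Hz H2).
    + exact (HCd B HB z Hz H1).
Qed.

Lemma union_list (X : MetricSpace) (l : list (X -> Prop)) (L : list (X -> Prop)) :
  (forall U, In U L -> clopen X U /\ forall B, In B l -> forall z, B z -> ~ U z) ->
  clopen X (fun z => exists U, In U L /\ U z) /\
  forall B, In B l -> forall z, B z -> ~ (exists U, In U L /\ U z).
Proof.
  induction L as [|U0 L IH]; intros H.
  - split.
    + apply (clopen_ext X (fun _ => False)); [|apply clopen_empty].
      intros z; split; [tauto|]. intros [U [[] _]].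
    + intros B _ z _ [U [[] _]].
  - destruct IH as [IHc IHd]. { intros U HU; apply H; right; auto. }
    destruct (H U0 (or_introl eq_refl)) as [H0c H0d].
    split.
    + apply (clopen_ext X (fun z => U0 z \/ exists U, In U L /\ U z)).
      * intros z; split.
        -- intros [Hz|[U [HU Hz]]]; [exists U0; simpl; auto|exists U; simpl; auto].
        -- intros [U [[<-|HU] Hz]]; [left; auto|right; eauto].
      * apply clopen_union; auto.
    + intros B HB z Hz [U [[<-|HU] HUz]].
      * exact (H0d B HB z Hz HUz).
      * apply (IHd B HB z Hz). eauto.
Qed.

Lemma compact_sep (X : MetricSpace) (K : X -> Prop) (l : list (X -> Prop)) :
  compact_set X K ->
  (forall B, In B l -> C_set X B /\ forall z, B z -> ~ K z) ->
  exists D, clopen X D /\ (forall z, K z -> D z) /\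
    forall B, In B l -> forall z, B z -> ~ D z.
Proof.
  intros HK Hl.
  set (F := fun U => clopen X U /\ forall B, In B l -> forall z, B z -> ~ U z).
  destruct (HK F) as [L [HL Hcov]].
  - intros U [[Ho _] _]; exact Ho.
  - intros x Kx. destruct (sep_list X x l) as [C [HC [Cx HCd]]].
    + intros B HB. destruct (Hl B HB) as [HB1 HB2]. split; auto.
      intro Bx. exact (HB2 x Bx Kx).
    + exists C. split; [split; auto|auto].
  - destruct (union_list X l L HL) as [Hc Hd].
    exists (fun z => exists U, In U L /\ U z). split; auto.
Qed.

Lemma key_cover (X : MetricSpace) (V : X -> Prop) :
  separable X -> almost_zero_dimensional X -> is_open X V ->
  exists Bk : nat -> nat -> (X -> Prop),
    (forall k j, C_set X (Bk k j) /\ subset X (Bk k j) V) /\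
    (forall y, V y -> exists k j r, r > 0 /\ subset X (ball X y r) (Bk k j)).
Proof.
  intros [D [[g Hg] Hdense]] Haz HV.
  set (core := fun k j (B : X -> Prop) => exists d, D d /\ g d = k /\
        subset X (ball X d (/ (INR j + 1))) B).
  set (Q := fun k j (B : X -> Prop) => C_set X B /\ subset X B V /\
        ((exists B', C_set X B' /\ subset X B' V /\ core k j B') -> core k j B)).
  assert (Hex : forall k j, exists B, Q k j B).
  { intros k j. destruct (classic (exists B', C_set X B' /\ subset X B' V /\ core k j B'))
      as [[B' [H1 [H2 H3]]]|Hn].
    - exists B'. split; auto.
    - exists (fun _ => False). split; [|split].
      + exists (fun C => forall z, ~ C z). split.
        * intros C HC. apply (clopen_ext X (fun _ => False)); [|apply clopen_empty].
          intros z; split; [tauto|]. intro Hz; exact (HC z Hz).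
        * intros z; split; [tauto|]. intros H. apply (H (fun _ => False)). auto.
      + intros z [].
      + intros H; exfalso; auto. }
  exists (fun k j => proj1_sig (constructive_indefinite_description _ (Hex k j))).
  split.
  - intros k j. pose proof (proj2_sig (constructive_indefinite_description _ (Hex k j))) as [H1 [H2 _]].
    auto.
  - intros y Vy. destruct (Haz y V HV Vy) as [A [HA [[O [HO [Oy HOA]]] HAV]]].
    destruct (HO y Oy) as [r [Hr Hs]].
    destruct (archimed_cor1 (r/2)) as [N [HN HN0]]; [lra|].
    assert (HNpos : 0 < INR N) by (apply lt_0_INR; auto).
    set (e := / (INR N + 1)).
    assert (He : 0 < e) by (unfold e; apply Rinv_0_lt_compat; lra).
    assert (He2 : e <= / INR N) by (unfold e; apply Rinv_le_contravar; lra).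
    destruct (Hdense y e He) as [d [Dd Hyd]].
    assert (Hcore : core (g d) N A).
    { exists d. split; auto. split; auto. intros z Hz. apply HOA, Hs.
      unfold ball in *. pose proof (Defs.dist_tri X y d z). fold e in Hz. lra. }
    pose proof (proj2_sig (constructive_indefinite_description _ (Hex (g d) N))) as [HB1 [HB2 HB3]].
    destruct HB3 as [d' [Dd' [Hgd Hsub]]].
    { exists A. auto. }
    assert (d' = d) by (apply Hg; auto). subst d'.
    assert (Hyb : ball X d e y) by (unfold ball; rewrite Defs.dist_sym; auto).
    destruct (ball_open X d e y Hyb) as [s [Hs0 Hss]].
    exists (g d), N, s. split; auto. intros z Hz. apply Hsub, Hss, Hz.
Qed.

Lemma fin_min (X : MetricSpace) (Dn : nat -> X -> Prop) y :
  (forall n, is_closed X (Dn n)) -> (forall n, ~ Dn n y) ->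
  forall N, exists s, s > 0 /\ forall z, Defs.dist X y z < s ->
    forall n, (n < N)%nat -> ~ Dn n z.
Proof.
  intros Hc Hy. induction N as [|N IH].
  - exists 1. split; [lra|]. intros z _ n Hn. lia.
  - destruct IH as [s [Hs Hz]]. destruct (Hc N y (Hy N)) as [s' [Hs' Hz']].
    exists (Rmin s s'). split; [apply Rmin_pos; auto|].
    intros z Hd n Hn. pose proof (Rmin_l s s'). pose proof (Rmin_r s s').
    destruct (Nat.eq_dec n N) as [->|Hne].
    + apply Hz'. unfold ball. lra.
    + apply Hz; [lra|lia].
Qed.

Lemma rim_zd (X : MetricSpace) :
  separable X -> almost_zero_dimensional X -> rim_sigma_compact X ->
  zero_dimensional X.
Proof.
  intros Hsep Haz Hrim x U HU Ux.
  destruct (Hrim x U HU Ux) as [V [HV [Vx [HVU [K [HKc HKe]]]]]].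
  destruct (key_cover X V Hsep Haz HV) as [Bk [HBk Hcov]].
  destruct (Haz x V HV Vx) as [Bx [HBx [[O [_ [Ox HOB]]] HBxV]]].
  assert (Bxx : Bx x) by (apply HOB; auto).
  set (l := fun n => Bx :: map (fun p => Bk (fst p) (snd p))
          (list_prod (seq 0 (S n)) (seq 0 (S n)))).
  assert (Hl : forall n B, In B (l n) -> C_set X B /\ subset X B V).
  { intros n B [<-|HB]; auto. apply in_map_iff in HB.
    destruct HB as [[k j] [<- _]]. apply HBk. }
  assert (Hin : forall n k j, (k <= n)%nat -> (j <= n)%nat -> In (Bk k j) (l n)).
  { intros n k j Hk Hj. right. apply in_map_iff. exists (k, j). split; auto.
    apply in_prod; apply in_seq; lia. }
  assert (HDex : forall n, exists D, clopen X D /\ (forall z, K n z -> D z) /\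
            forall B, In B (l n) -> forall z, B z -> ~ D z).
  { intros n. apply compact_sep; auto. intros B HB. destruct (Hl n B HB) as [H1 H2].
    split; auto. intros z Bz Kz. assert (Vz : V z) by (apply H2; auto).
    assert (Hb : boundary X V z) by (apply HKe; eauto).
    exact (open_not_cl_compl X V z HV Vz (proj2 Hb)). }
  set (Dn := fun n => proj1_sig (constructive_indefinite_description _ (HDex n))).
  assert (HD : forall n, clopen X (Dn n) /\ (forall z, K n z -> Dn n z) /\
            forall B, In B (l n) -> forall z, B z -> ~ Dn n z).
  { intros n. exact (proj2_sig (constructive_indefinite_description _ (HDex n))). }
  clearbody Dn.
  exists (fun y => V y /\ forall n, ~ Dn n y). split; [split|split].
  - intros y [Vy Hy]. destruct (Hcov y Vy) as [k [j [r [Hr Hs]]]].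
    destruct (fin_min X Dn y (fun n => proj2 (proj1 (HD n))) Hy (max k j))
      as [s [Hs0 Hsz]].
    destruct (HV y Vy) as [r' [Hr' Hs']].
    exists (Rmin r (Rmin s r')). split.
    { apply Rmin_pos; auto. apply Rmin_pos; auto. }
    intros z Hz. unfold ball in Hz.
    pose proof (Rmin_l r (Rmin s r')). pose proof (Rmin_r r (Rmin s r')).
    pose proof (Rmin_l s r'). pose proof (Rmin_r s r').
    split.
    + apply Hs'. unfold ball. lra.
    + intros n. destruct (Nat.lt_ge_cases n (max k j)) as [Hn|Hn].
      * apply Hsz; [lra|auto].
      * apply (proj2 (proj2 (HD n)) (Bk k j)).
        -- apply Hin; lia.
        -- apply Hs. unfold ball. lra.
  - intros y Hy. destruct (classic (exists n, Dn n y)) as [[n Hn]|Hno].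
    + destruct (proj1 (proj1 (HD n)) y Hn) as [r [Hr Hs]].
      exists r. split; auto. intros z Hz [_ Hw]. exact (Hw n (Hs z Hz)).
    + assert (nVy : ~ V y).
      { intro Vy. apply Hy. split; auto. intros n Hn. apply Hno; eauto. }
      destruct (classic (closure X V y)) as [Hc|Hc].
      * exfalso. assert (Hb : boundary X V y).
        { split; auto. intros r Hr. exists y. split; auto.
          rewrite Defs.dist_self. lra. }
        destruct (proj1 (HKe y) Hb) as [n Kn]. apply Hno. exists n.
        apply (proj1 (proj2 (HD n))); auto.
      * unfold closure in Hc. apply not_all_ex_not in Hc. destruct Hc as [r Hc].
        apply imply_to_and in Hc. destruct Hc as [Hr Hc].
        exists r. split; auto. intros z Hz [Vz _]. apply Hc. exists z. auto.
  - split; auto. intros n. apply (proj2 (proj2 (HD n)) Bx); auto. left; auto.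
  - intros z [Vz _]. auto.
Qed.

Lemma rational_rim (X : MetricSpace) : rational X -> rim_sigma_compact X.
Proof.
  intros Hr x U HU Ux. destruct (Hr x U HU Ux) as [V [HV [Vx [HVU [g Hg]]]]].
  exists V. split; auto. split; auto. split; auto.
  exists (fun n y => boundary X V y /\ g y = n). split.
  - intros n F HF Hcov. destruct (classic (exists p, boundary X V p /\ g p = n)) as [[p Hp]|Hn].
    + destruct (Hcov p Hp) as [W [FW Wp]]. exists (W :: nil). split.
      * intros U0 [<-|[]]; auto.
      * intros y [Hy Hgy]. exists W. split; [left; auto|].
        assert (y = p) as -> by (apply Hg; try tauto; rewrite Hgy; symmetry; tauto). auto.
    + exists nil. split; [intros _ []|]. intros y Hy. exfalso. apply Hn; eauto.
  - intros y; split; [intros H; exists (g y); auto|intros [n [H _]]; auto].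
Qed.

Theorem corollary4p6 (X : MetricSpace) :
  separable X ->
  almost_zero_dimensional X ->
  (rim_sigma_compact X \/ rational X) ->
  zero_dimensional X.
Proof.
  intros Hs Ha [Hr|Hr]; apply rim_zd; auto. apply rational_rim; auto.
Qed.
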